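(* For every finite set $S$, the monotone map $\eta_S \colon 1 \star S \to [1]^S$ exhibits $[1]^S$ as the free semilattice on the poset $1\star S$. That is, for every semilattice $A$ and every monotone map $f \colon 1 \star S \to A$ (with respect to the order $x\le y \iff x\vee y=y$ on $A$), there is a unique semilattice homomorphism $f^\dagger \colon [1]^S \to A$ such that $f = f^\dagger \circ \eta_S$.
   Context: A (join-)semilattice is a set with an associative, commutative, idempotent binary operation $\vee$; a semilattice homomorphism is a map preserving $\vee$ (no bounds required). Every semilattice is a poset via $x \le y \iff x \vee y = y$. $[1]=\{0<1\}$ is the two-element linear order with $\vee=\max$, and $[1]^S$ carries the pointwise semilattice structure. For a set $S$ (viewed as a discrete poset), $1 \star S$ denotes the poset obtained by adjoining a new minimum element $\bot$ to $S$. The map $\eta_S \colon 1\star S \to [1]^S$ sends $\bot$ to the constant function $0$ and $i \in S$ to the function that is $1$ at $i$ and $0$ elsewhere. *)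

(* Defs.v *)
From HB Require Import structures.
From mathcomp Require Import all_boot all_order.
Set Implicit Arguments. Unset Strict Implicit. Unset Printing Implicit Defensive.
Import Order.TTheory.
Local Open Scope order_scope.

(* 1 ⋆ S : the discrete set S with a new minimum adjoined, modelled as
   [option S] with [None] = ⊥ and [Some i] = i. *)
Definition star_le (S : finType) (x y : option S) : bool :=
  match x, y with
  | None, _ => true
  | Some i, Some j => i == j
  | Some _, None => false
  end.

(* [1]^S = functions S -> {0<1} (bool, false = 0), pointwise join = max = orb. *)
Definition pjoin (S : finType) (u v : {ffun S -> bool}) : {ffun S -> bool} :=
  [ffun i => u i || v i].

Definition etaS (S : finType) (x : option S) : {ffun S -> bool} :=
  match x with
  | None => [ffun _ => false]
  | Some i => [ffun j => j == i]
  end.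

Definition star_monotone (S : finType) d (A : joinSemilatticeType d)
  (f : option S -> A) : Prop :=
  forall x y : option S, star_le x y -> f x `|` f y = f y.

Definition pjoin_hom (S : finType) d (A : joinSemilatticeType d)
  (g : {ffun S -> bool} -> A) : Prop :=
  forall u v, g (pjoin u v) = g u `|` g v.

(* Main.v *)
Require Import Defs.
From HB Require Import structures.
From Stdlib Require Import FunctionalExtensionality.
From mathcomp Require Import all_boot all_order.
Local Open Scope order_scope.
Import Order.TTheory.

Section Aux.
Variables (S : finType) (d : Order.disp_t) (A : joinSemilatticeType d)
  (f : option S -> A).

Definition G (s : seq S) : A := foldr (fun i acc => f (Some i) `|` acc) (f None) s.

Lemma Gle s z : (G s <= z) = (f None <= z) && all (fun i => f (Some i) <= z) s.
Proof.
elim: s => [|i s IH] /=; first by rewrite andbT.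
by rewrite leUx IH andbCA.
Qed.

Lemma Geq (x y : A) : (forall z, (x <= z) = (y <= z)) -> x = y.
Proof. by move=> H; apply: le_anti; rewrite H lexx -H lexx. Qed.

Lemma G_eqmem s t : s =i t -> G s = G t.
Proof.
move=> st; apply: Geq => z; rewrite !Gle; congr (_ && _).
by apply: eq_all_r.
Qed.

Lemma G_cat s t : G (s ++ t) = G s `|` G t.
Proof.
apply: Geq => z; rewrite leUx !Gle all_cat.
by case: (f None <= z); case: all; case: all.
Qed.

Lemma h_G (h : {ffun S -> bool} -> A) : pjoin_hom h ->
  (forall x : option S, f x = h (etaS x)) ->
  forall s, h [ffun i => i \in s] = G s.
Proof.
move=> hh hf; elim=> [|x s IH] /=.
  rewrite hf /=; congr h; apply/ffunP => i; by rewrite !ffunE.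
rewrite -IH hf -hh; congr h; apply/ffunP => i.
by rewrite !ffunE in_cons.
Qed.
End Aux.

Theorem mainTheorem1 (S : finType) (d : Order.disp_t) (A : joinSemilatticeType d)
  (f : option S -> A) :
  star_monotone f ->
  exists! g : {ffun S -> bool} -> A,
    pjoin_hom g /\ (forall x : option S, f x = g (etaS x)).
Proof.
move=> mon.
have hE : forall i : S, (i \in Finite.enum S) by move=> i; rewrite -enumT mem_enum.
exists (fun u => @G _ _ _ f [seq i <- enum S | u i]); split; first split.
- move=> u v /=; rewrite -G_cat; apply: G_eqmem => i.
  by rewrite mem_cat !mem_filter ffunE /= andb_orl.
- case=> [x|] /=.
    rewrite (@G_eqmem _ _ _ f _ [:: x]) /=; last first.
      by move=> i; rewrite mem_filter ffunE inE mem_enum andbT.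
    by rewrite joinC mon.
  rewrite (@G_eqmem _ _ _ f _ [::]) //.
  by move=> i; rewrite mem_filter ffunE.
- move=> h [hh hf]; apply: functional_extensionality_dep => u.
  rewrite -(@h_G _ _ _ f h hh hf); congr h; apply/ffunP => i.
  by rewrite ffunE mem_filter mem_enum andbT.
Qed.
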